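(* Let $s\in(0,1)$, $0<\iota<\min\{s,1/3\}$, let $\omega$ satisfy condition (M) with parameter $\iota$, and let $C>0$. Then there exist $t_0>0$ and a function $\zeta:[0,\infty)\to[0,\infty)$ with $\zeta\in C([0,\infty))\cap C^2((0,\infty))\cap C^3((0,2))$ satisfying (Z0), (Z1), (Z2), (Z3), (Z4) and $$C\big(t^s+\omega(t)\big)\le t\zeta'(t)\quad\text{for all }0<t<t_0.$$
   Context: Condition (M) with parameter $\iota$: $\omega:[0,\infty)\to[0,\infty)$ is continuous, increasing and concave, $C^2$ on $(0,\infty)$, $\omega(0)=0$, $\int_0^1\omega(t)/t\,dt<\infty$, and there is $t_0>0$ with $\omega(t)/t^\iota$ decreasing on $(0,t_0)$ and $t^2\omega''(t)\ge-\omega(t)-3t\omega'(t)$ on $(0,t_0)$. (Z0): $\zeta$ positive on $(0,\infty)$, increasing, concave, $\zeta(0)=0$. (Z1): there are $c_1>0$, $t_0\in(0,1)$ with $t^2\zeta'''(t)\ge-c_1\zeta'(t)$ for $0<t<t_0$. (Z2): $t\mapsto t\zeta'(t)$ nondecreasing on $(0,\infty)$. (Z3): there are $\iota>0$, $t_0>0$ such that $\zeta(t)/t^\iota$ is decreasing on $(0,t_0]$. (Z4): there is $c_2>0$ with $\zeta(t)\le c_2(1+t)^{s/2}$ for $t\ge0$. *)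

(* Defs.v *)
From Stdlib Require Import Reals.
From Coquelicot Require Import Coquelicot.
Open Scope R_scope.

Definition cont_on_nonneg (f : R -> R) : Prop :=
  forall x, 0 <= x ->
    filterlim f (within (fun y => 0 <= y) (locally x)) (locally (f x)).

Definition Cn_on (n : nat) (D : R -> Prop) (f : R -> R) : Prop :=
  forall x, D x ->
    (forall k, (k <= n)%nat -> ex_derive_n f k x) /\
    continuous (Derive_n f n) x.

Definition incr_on_nonneg (f : R -> R) : Prop :=
  forall x y, 0 <= x -> x < y -> f x < f y.

Definition concave_on_nonneg (f : R -> R) : Prop :=
  forall x y l, 0 <= x -> 0 <= y -> 0 <= l <= 1 ->
    l * f x + (1 - l) * f y <= f (l * x + (1 - l) * y).

Definition condM (iota : R) (omega : R -> R) : Prop :=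
  (forall t, 0 <= t -> 0 <= omega t) /\
  cont_on_nonneg omega /\
  incr_on_nonneg omega /\
  concave_on_nonneg omega /\
  Cn_on 2 (fun t => 0 < t) omega /\
  omega 0 = 0 /\
  ex_RInt_gen (fun t => omega t / t) (at_right 0) (at_point 1) /\
  (exists t0, 0 < t0 /\
     (forall x y, 0 < x -> x < y -> y < t0 ->
        omega y / Rpower y iota < omega x / Rpower x iota) /\
     (forall t, 0 < t < t0 ->
        t ^ 2 * Derive_n omega 2 t >= - omega t - 3 * t * Derive omega t)).

Definition condZ0 (zeta : R -> R) : Prop :=
  (forall t, 0 < t -> 0 < zeta t) /\
  incr_on_nonneg zeta /\ concave_on_nonneg zeta /\ zeta 0 = 0.

Definition condZ1 (zeta : R -> R) : Prop :=
  exists c1 t0, 0 < c1 /\ 0 < t0 < 1 /\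
    forall t, 0 < t < t0 -> t ^ 2 * Derive_n zeta 3 t >= - c1 * Derive zeta t.

Definition condZ2 (zeta : R -> R) : Prop :=
  forall x y, 0 < x -> x <= y -> x * Derive zeta x <= y * Derive zeta y.

Definition condZ3 (zeta : R -> R) : Prop :=
  exists iota t0, 0 < iota /\ 0 < t0 /\
    forall x y, 0 < x -> x < y -> y <= t0 ->
      zeta y / Rpower y iota < zeta x / Rpower x iota.

Definition condZ4 (s : R) (zeta : R -> R) : Prop :=
  exists c2, 0 < c2 /\ forall t, 0 <= t -> zeta t <= c2 * Rpower (1 + t) (s / 2).

(* Main.v *)
Require Import Defs.
From Stdlib Require Import Reals Lra Lia.
From Coquelicot Require Import Coquelicot.
Open Scope R_scope.


Lemma ballR_iff (x e y : R) : ball x e y <-> Rabs (y - x) < e.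
Proof. unfold ball; simpl; unfold AbsRing_ball, abs, minus, plus, opp; simpl. tauto. Qed.

Lemma loc_between (a b t : R) : a < t < b -> locally t (fun y => a < y < b).
Proof.
  intros H. assert (He : 0 < Rmin (t - a) (b - t)) by (apply Rmin_pos; lra).
  exists (mkposreal _ He). intros y Hy. apply ballR_iff in Hy. simpl in Hy.
  apply Rabs_lt_between' in Hy.
  pose proof (Rmin_l (t-a) (b-t)); pose proof (Rmin_r (t-a) (b-t)). lra.
Qed.

Lemma loc_pos (t : R) : 0 < t -> locally t (fun y => 0 < y).
Proof.
  intros H. apply filter_imp with (P := fun y => 0 < y < t + 1).
  - intros y Hy; lra.
  - apply loc_between; lra.
Qed.

Lemma MVT_open (f df : R -> R) (a b : R) : a < b ->
  (forall x, a < x < b -> is_derive f x (df x)) ->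
  (forall x, a <= x <= b -> continuity_pt f x) ->
  exists c, a < c < b /\ f b - f a = df c * (b - a).
Proof.
  intros Hab Hd Hc.
  assert (pr1 : forall c, a < c < b -> derivable_pt f c).
  { intros c Hc'. exists (df c). apply is_derive_Reals. apply Hd; auto. }
  assert (pr2 : forall c, a < c < b -> derivable_pt id c).
  { intros c _. apply derivable_pt_id. }
  destruct (MVT f id a b pr1 pr2 Hab Hc (fun c _ => derivable_continuous_pt _ _ (derivable_pt_id c)))
    as [c [P HP]].
  exists c. split; auto.
  assert (E1 : derive_pt f c (pr1 c P) = df c).
  { apply derive_pt_eq_0. apply is_derive_Reals. apply Hd; auto. }
  assert (E2 : derive_pt id c (pr2 c P) = 1).
  { apply derive_pt_eq_0. apply derivable_pt_lim_id. }
  rewrite E1, E2 in HP. unfold id in HP. lra.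
Qed.

Lemma incr_deriv (f df : R -> R) (a b : R) : a < b ->
  (forall x, a < x < b -> is_derive f x (df x)) ->
  (forall x, a < x < b -> 0 < df x) ->
  (forall x, a <= x <= b -> continuity_pt f x) -> f a < f b.
Proof.
  intros Hab Hd Hp Hc. destruct (MVT_open f df a b Hab Hd Hc) as [c [Hc1 Hc2]].
  pose proof (Hp c Hc1). assert (0 < df c * (b - a)) by (apply Rmult_lt_0_compat; lra). lra.
Qed.

Lemma cmp_deriv (f g df dg : R -> R) (a b : R) : a < b ->
  (forall x, a < x < b -> is_derive f x (df x)) ->
  (forall x, a < x < b -> is_derive g x (dg x)) ->
  (forall x, a < x < b -> df x <= dg x) ->
  (forall x, a <= x <= b -> continuity_pt f x) ->
  (forall x, a <= x <= b -> continuity_pt g x) ->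
  f b - f a <= g b - g a.
Proof.
  intros Hab Hf Hg Hle Hcf Hcg.
  destruct (MVT_open (fun x => g x - f x) (fun x => dg x - df x) a b Hab) as [c [Hc1 Hc2]].
  - intros x Hx. apply (is_derive_minus g f); auto.
  - intros x Hx. apply continuity_pt_minus; auto.
  - pose proof (Hle c Hc1). assert (0 <= (dg c - df c) * (b - a)) by (apply Rmult_le_pos; lra). lra.
Qed.

Lemma chord_strict (f df : R -> R) :
  (forall x, 0 < x -> is_derive f x (df x)) ->
  (forall x y, 0 < x -> x < y -> df y < df x) ->
  (forall x, 0 <= x -> continuity_pt f x) ->
  forall x y l, 0 <= x -> x < y -> 0 < l < 1 ->
  l * f x + (1 - l) * f y < f (l * x + (1 - l) * y).
Proof.
  intros Hd Hdec Hc x y l Hx Hxy Hl.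
  set (z := l * x + (1 - l) * y).
  assert (Hz : x < z < y) by (unfold z; nra).
  destruct (MVT_open f df x z) as [c1 [Hc1 E1]]; try lra.
  { intros u Hu; apply Hd; lra. } { intros u Hu; apply Hc; lra. }
  destruct (MVT_open f df z y) as [c2 [Hc2 E2]]; try lra.
  { intros u Hu; apply Hd; lra. } { intros u Hu; apply Hc; lra. }
  assert (Hlt : df c2 < df c1) by (apply Hdec; lra).
  assert (Ezx : z - x = (1 - l) * (y - x)) by (unfold z; ring).
  assert (Eyz : y - z = l * (y - x)) by (unfold z; ring).
  rewrite Ezx in E1. rewrite Eyz in E2.
  assert (0 < l * (1 - l) * (y - x)) by (apply Rmult_lt_0_compat; nra).
  assert (l * (f z - f x) > (1 - l) * (f y - f z)).
  { rewrite E1, E2. nra. }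
  lra.
Qed.

Lemma deriv_ge (f : R -> R) (y l m d0 : R) : is_derive f y l -> 0 < d0 ->
  (forall h, 0 < h < d0 -> m <= (f (y + h) - f y) / h) -> m <= l.
Proof.
  intros Hd Hd0 H. apply is_derive_Reals in Hd.
  destruct (Rle_or_lt m l) as [|Hlt]; auto.
  assert (He : 0 < (m - l) / 2) by lra.
  destruct (Hd _ He) as [del Hdel].
  set (h := Rmin (del / 2) (d0 / 2)).
  assert (Hh : 0 < h) by (apply Rmin_pos; destruct del; simpl; lra).
  assert (Hh1 : h <= del / 2) by apply Rmin_l. assert (Hh2 : h <= d0 / 2) by apply Rmin_r.
  specialize (Hdel h (Rgt_not_eq _ _ Hh)).
  assert (Rabs h < del) by (rewrite Rabs_right; destruct del; simpl in *; lra).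
  specialize (Hdel H0). specialize (H h ltac:(lra)).
  apply Rabs_lt_between' in Hdel. lra.
Qed.

Lemma deriv_le (f : R -> R) (y l M d0 : R) : is_derive f y l -> 0 < d0 ->
  (forall h, 0 < h < d0 -> (f y - f (y - h)) / h <= M) -> l <= M.
Proof.
  intros Hd Hd0 H. apply is_derive_Reals in Hd.
  destruct (Rle_or_lt l M) as [|Hlt]; auto.
  assert (He : 0 < (l - M) / 2) by lra.
  destruct (Hd _ He) as [del Hdel].
  set (h := Rmin (del / 2) (d0 / 2)).
  assert (Hh : 0 < h) by (apply Rmin_pos; destruct del; simpl; lra).
  assert (Hh1 : h <= del / 2) by apply Rmin_l. assert (Hh2 : h <= d0 / 2) by apply Rmin_r.
  specialize (Hdel (- h) ltac:(lra)).
  assert (Rabs (- h) < del) by (rewrite Rabs_Ropp, Rabs_right; destruct del; simpl in *; lra).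
  specialize (Hdel H0). specialize (H h ltac:(lra)).
  replace ((f (y + - h) - f y) / - h) with ((f y - f (y - h)) / h) in Hdel
    by (unfold Rminus; field; lra).
  apply Rabs_lt_between' in Hdel. lra.
Qed.


Section S.
Context (iota : R) (w : R -> R) (HM : condM iota w).

Lemma W0 : w 0 = 0.
Proof. destruct HM as (_&_&_&_&_&H&_); exact H. Qed.
Lemma Wnn t : 0 <= t -> 0 <= w t.
Proof. destruct HM as (H&_); auto. Qed.
Lemma Winc x y : 0 <= x -> x < y -> w x < w y.
Proof. destruct HM as (_&_&H&_); auto. Qed.
Lemma Wmono x y : 0 <= x -> x <= y -> w x <= w y.
Proof. intros. destruct (Req_dec x y). subst; lra. left; apply Winc; lra. Qed.
Lemma Wpos t : 0 < t -> 0 < w t.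
Proof. intros. rewrite <- W0 at 1. apply Winc; lra. Qed.
Lemma Wscale l u : 0 <= l <= 1 -> 0 <= u -> l * w u <= w (l * u).
Proof.
  intros Hl Hu. destruct HM as (_&_&_&Hc&_).
  pose proof (Hc u 0 l Hu (Rle_refl 0) Hl) as H. rewrite W0 in H.
  replace (l * u + (1 - l) * 0) with (l * u) in H by ring. lra.
Qed.
Lemma Wd1 y : 0 < y -> is_derive w y (Derive w y).
Proof.
  intros Hy. destruct HM as (_&_&_&_&HC&_). destruct (HC y Hy) as [Hk _].
  apply Derive_correct. exact (Hk 1%nat ltac:(lia)).
Qed.
Lemma Wd2 y : 0 < y -> is_derive (Derive w) y (Derive (Derive w) y).
Proof.
  intros Hy. destruct HM as (_&_&_&_&HC&_). destruct (HC y Hy) as [Hk _].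
  apply Derive_correct. exact (Hk 2%nat ltac:(lia)).
Qed.
Lemma Wc2 y : 0 < y -> continuous (Derive (Derive w)) y.
Proof.
  intros Hy. destruct HM as (_&_&_&_&HC&_). destruct (HC y Hy) as [_ Hk]. exact Hk.
Qed.
Lemma Wcont y : 0 < y -> continuous w y.
Proof. intros Hy. apply (@ex_derive_continuous R_AbsRing R_NormedModule). eexists; apply Wd1; auto. Qed.
Lemma W1nn y : 0 < y -> 0 <= Derive w y.
Proof.
  intros Hy. apply (deriv_ge w y _ 0 1 (Wd1 y Hy)); [lra|].
  intros h Hh. pose proof (Winc y (y+h) ltac:(lra) ltac:(lra)).
  apply Rdiv_le_0_compat; lra.
Qed.
Lemma W1c y : 0 < y -> y * Derive w y <= w y.
Proof.
  intros Hy. assert (Derive w y <= w y / y).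
  { apply (deriv_le w y _ _ y (Wd1 y Hy)); [lra|].
    intros h Hh. pose proof (Wscale ((y - h)/y) y) as H.
    replace ((y - h) / y * y) with (y - h) in H by (field; lra).
    assert (Hl : 0 <= (y - h) / y <= 1).
    { split. apply Rdiv_le_0_compat; lra.
      unfold Rdiv; apply Rmult_le_reg_r with y; [lra|]. rewrite Rmult_assoc, Rinv_l by lra. lra. }
    specialize (H Hl ltac:(lra)).
    apply Rmult_le_reg_r with h; [lra|].
    unfold Rdiv. rewrite Rmult_assoc, Rinv_l by lra.
    replace ((y - h) / y * w y) with (w y - h * (w y / y)) in H by (field; lra).
    lra. }
  apply Rmult_le_reg_r with (/ y). apply Rinv_0_lt_compat; lra.
  replace (y * Derive w y * / y) with (Derive w y) by (field; lra). exact H.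
Qed.
End S.


Definition gg (t : R) := t / (2 * (1 + t)).
Definition ff (w : R -> R) (u : R) := w u * / u.
Definition kk (w : R -> R) (u : R) := w (Rabs u) * (2 / (1 - 2 * u)).
Definition Phi (w : R -> R) (I0 : R) (x : R) := I0 - RInt (ff w) x 1 + RInt (kk w) 0 x.
Definition z2 (w : R -> R) (I0 : R) (t : R) := if Rlt_dec 0 t then Phi w I0 (gg t) else 0.

Section S2.
Context (iota : R) (w : R -> R) (HM : condM iota w) (I0 : R)
  (HI : is_RInt_gen (ff w) (at_right 0) (at_point 1) I0).

Lemma cont_wabs u : continuous (fun u => w (Rabs u)) u.
Proof.
  destruct (Req_dec u 0) as [->|Hu].
  - destruct HM as (_&Hc&_). specialize (Hc 0 (Rle_refl 0)).
    intros P HP. cbv beta in HP. rewrite Rabs_R0 in HP. specialize (Hc P HP).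
    destruct Hc as [eps He]. exists eps. intros y Hy.
    apply He; [|apply Rabs_pos].
    apply ballR_iff. apply (proj1 (ballR_iff _ _ _)) in Hy. rewrite Rminus_0_r in *. rewrite Rabs_Rabsolu. exact Hy.
  - apply (continuous_comp Rabs w). apply continuous_Rabs.
    apply (Wcont iota w HM). apply Rabs_pos_lt; auto.
Qed.

Lemma cont_kk u : u < 1/2 -> continuous (kk w) u.
Proof.
  intros Hu. unfold kk. apply (continuous_mult (fun u => w (Rabs u)) (fun u => 2 / (1 - 2 * u))).
  apply cont_wabs.
  apply (@ex_derive_continuous R_AbsRing R_NormedModule). auto_derive. lra.
Qed.

Lemma cont_ff u : 0 < u -> continuous (ff w) u.
Proof.
  intros Hu. unfold ff. apply (continuous_mult w (fun u => / u)).
  apply (Wcont iota w HM); auto. apply continuous_Rinv; lra.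
Qed.

Lemma isRInt_ff a : 0 < a -> is_RInt (ff w) a 1 (RInt (ff w) a 1).
Proof.
  intros Ha. apply (RInt_correct (V:=R_CompleteNormedModule)). apply ex_RInt_continuous.
  intros z Hz. apply cont_ff. pose proof (Rmin_glb_lt a 1 0 Ha ltac:(lra)). lra.
Qed.

Lemma isRInt_kk b : b < 1/2 -> is_RInt (kk w) 0 b (RInt (kk w) 0 b).
Proof.
  intros Hb. apply (RInt_correct (V:=R_CompleteNormedModule)). apply ex_RInt_continuous.
  intros z Hz. apply cont_kk. pose proof (Rmax_lub_lt 0 b (1/2) ltac:(lra) Hb). lra.
Qed.

Lemma der_RInt_kk x : x < 1/2 -> is_derive (RInt (kk w) 0) x (kk w x).
Proof.
  intros Hx. apply (is_derive_RInt (V:=R_NormedModule) (kk w) (RInt (kk w) 0) 0 x).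
  - apply filter_imp with (P := fun b => -1 + x < b < 1/2).
    + intros b Hb. apply isRInt_kk; lra.
    + apply loc_between; lra.
  - apply cont_kk; auto.
Qed.

Lemma der_Phi x : 0 < x < 1/2 -> is_derive (Phi w I0) x (ff w x + kk w x).
Proof.
  intros Hx.
  assert (D1 : is_derive (fun a => RInt (ff w) a 1) x (opp (ff w x))).
  { apply (is_derive_RInt' (V:=R_NormedModule) (ff w) (fun a => RInt (ff w) a 1) x 1).
    - apply filter_imp with (P := fun b => 0 < b). intros b Hb. apply isRInt_ff; auto.
      apply loc_pos; lra.
    - apply cont_ff; lra. }
  pose proof (der_RInt_kk x ltac:(lra)) as D2.
  pose proof (is_derive_plus _ _ x _ _ (is_derive_minus _ _ x _ _ (is_derive_const I0 x) D1) D2) as D.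
  replace (ff w x + kk w x) with (plus (minus zero (opp (ff w x))) (kk w x)).
  - eapply is_derive_ext; [|exact D]. intros t. simpl.
    unfold Phi, plus, minus, opp; simpl. reflexivity.
  - unfold minus. rewrite plus_zero_l, opp_opp. reflexivity.
Qed.

Lemma Phi_lim eps : 0 < eps -> exists d, 0 < d /\ forall x, 0 < x < d -> Rabs (Phi w I0 x) < eps.
Proof.
  intros He.
  assert (He2 : 0 < eps / 2) by lra. set (e2 := mkposreal _ He2).
  destruct (HI (ball I0 e2) (locally_ball I0 e2)) as [Q R HQ HR HQR].
  destruct HQ as [d1 Hd1]. unfold at_point in HR.
  assert (Hc : continuous (RInt (kk w) 0) 0).
  { apply (@ex_derive_continuous R_AbsRing R_NormedModule). eexists. apply der_RInt_kk; lra. }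
  destruct (proj1 (filterlim_locally _ _) Hc e2) as [d2 Hd2].
  exists (Rmin d1 d2). split. apply Rmin_pos; [destruct d1|destruct d2]; simpl; lra.
  intros x Hx. pose proof (Rmin_l d1 d2); pose proof (Rmin_r d1 d2).
  assert (Bx1 : ball 0 d1 x) by (apply ballR_iff; rewrite Rminus_0_r, Rabs_right; lra).
  assert (Bx2 : ball 0 d2 x) by (apply ballR_iff; rewrite Rminus_0_r, Rabs_right; lra).
  specialize (Hd1 x Bx1 ltac:(lra)).
  destruct (HQR x 1 Hd1 HR) as [y [Hy1 Hy2]]. simpl in Hy1.
  specialize (Hd2 x Bx2). apply (proj1 (ballR_iff _ _ _)) in Hd2. apply (proj1 (ballR_iff _ _ _)) in Hy2.
  rewrite RInt_point in Hd2. simpl in Hd2. unfold zero in Hd2; simpl in Hd2.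
  unfold Phi. rewrite (is_RInt_unique _ _ _ _ Hy1). simpl in *.
  replace (I0 - y + RInt (kk w) 0 x) with (-(y - I0) + (RInt (kk w) 0 x - 0)) by ring.
  eapply Rle_lt_trans; [apply Rabs_triang|]. rewrite Rabs_Ropp. lra.
Qed.
End S2.


Definition zeta (w : R -> R) (I0 B : R) (t : R) := B * z2 w I0 t + ln (1 + t).
Definition F1 (w : R -> R) (B t : R) := B * (w (gg t) / t) + / (1 + t).
Definition F2 (w : R -> R) (B t : R) :=
  B * (Derive w (gg t) * / (2 * (1 + t)^2) / t - w (gg t) / t^2) - / (1 + t)^2.
Definition F3 (w : R -> R) (B t : R) :=
  B * (Derive (Derive w) (gg t) * (/ (2 * (1 + t)^2))^2 / t
       - Derive w (gg t) * / (1 + t)^3 / t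
       - 2 * Derive w (gg t) * / (2 * (1 + t)^2) / t^2
       + 2 * w (gg t) / t^3) + 2 / (1 + t)^3.

Lemma gg_bounds t : 0 < t -> 0 < gg t < 1/2 /\ gg t <= t / 2.
Proof.
  intros Ht. unfold gg. split; [split|].
  - apply Rdiv_lt_0_compat; lra.
  - apply Rmult_lt_reg_r with (2 * (1 + t)); [lra|]. unfold Rdiv. rewrite Rmult_assoc, Rinv_l by lra. lra.
  - apply Rmult_le_reg_r with (2 * (1 + t)); [lra|]. unfold Rdiv. rewrite Rmult_assoc, Rinv_l by lra. nra.
Qed.

Lemma der_gg t : 0 < t -> is_derive gg t (/ (2 * (1 + t)^2)).
Proof. intros Ht. unfold gg. auto_derive. lra. field. lra. Qed.

Lemma der_lin (f g : R -> R) x a df dg : is_derive f x df -> is_derive g x dg ->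
  is_derive (fun y => a * f y + g y) x (a * df + dg).
Proof.
  intros Hf Hg. apply (is_derive_plus (fun y => a * f y) g). 2: exact Hg.
  apply (is_derive_scal f x a df Hf).
Qed.

Section S3.
Context (iota : R) (w : R -> R) (HM : condM iota w) (I0 : R)
  (HI : is_RInt_gen (ff w) (at_right 0) (at_point 1) I0) (B : R).

Lemma z2_der t : 0 < t -> is_derive (z2 w I0) t (w (gg t) / t).
Proof.
  intros Ht. destruct (gg_bounds t Ht) as [Hg1 Hg2].
  pose proof (is_derive_comp _ _ t _ _ (der_Phi iota w HM I0 (gg t) Hg1) (der_gg t Ht)) as D.
  replace (w (gg t) / t) with (/ (2 * (1 + t) ^ 2) * (ff w (gg t) + kk w (gg t))).
  { apply (is_derive_ext_loc (fun y => Phi w I0 (gg y))); [|exact D].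
    apply filter_imp with (P := fun y => 0 < y). intros y Hy. unfold z2.
    destruct (Rlt_dec 0 y); [reflexivity|lra]. apply loc_pos; auto. }
  unfold ff, kk. rewrite Rabs_right by lra.
  assert (E : / (2 * (1 + t) ^ 2) * (/ gg t + 2 / (1 - 2 * gg t)) = / t).
  { assert (E1 : / gg t = 2 * (1 + t) / t) by (unfold gg; field; lra).
    assert (E3 : 1 - 2 * gg t = / (1 + t)) by (unfold gg; field; lra).
    rewrite E1, E3. field. lra. }
  transitivity (w (gg t) * (/ (2 * (1 + t) ^ 2) * (/ gg t + 2 / (1 - 2 * gg t)))).
  unfold Rdiv; ring. rewrite E. unfold Rdiv; ring.
Qed.

Lemma z2_cont0 : continuity_pt (z2 w I0) 0.
Proof.
  unfold continuity_pt, continue_in, limit1_in, limit_in. simpl. unfold R_dist.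
  intros eps He. destruct (Phi_lim iota w HM I0 HI eps He) as [d [Hd H]].
  exists d. split; auto. intros x [_ Hx]. unfold z2 at 2. destruct (Rlt_dec 0 0); [lra|].
  rewrite Rminus_0_r in *. unfold z2. destruct (Rlt_dec 0 x).
  - destruct (gg_bounds x r). apply H. rewrite Rabs_right in Hx by lra. lra.
  - rewrite Rabs_R0. lra.
Qed.

Lemma zeta_der t : 0 < t -> is_derive (zeta w I0 B) t (F1 w B t).
Proof.
  intros Ht. apply (der_lin (z2 w I0) (fun t => ln (1 + t))). apply z2_der; auto.
  auto_derive. lra. ring.
Qed.

Lemma F1_der t : 0 < t -> is_derive (F1 w B) t (F2 w B t).
Proof.
  intros Ht. destruct (gg_bounds t Ht) as [Hg1 Hg2]. unfold F1, F2, gg.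
  auto_derive.
  - change (t * / (2 * (1 + t))) with (gg t).
    repeat split; try nra; eexists; first [apply (Wd1 iota w HM); lra | apply (Wd2 iota w HM); lra].
  - change (t * / (2 * (1 + t))) with (gg t).
    change (t / (2 * (1 + t))) with (gg t).
    change (Derive (fun x => w x)) with (Derive w).
    set (a := Derive w (gg t)). set (b := w (gg t)). unfold Rdiv. field. lra.
Qed.

Lemma F2_der t : 0 < t -> is_derive (F2 w B) t (F3 w B t).
Proof.
  intros Ht. destruct (gg_bounds t Ht) as [Hg1 Hg2]. unfold F2, F3, gg.
  auto_derive.
  - change (t * / (2 * (1 + t))) with (gg t).
    repeat split; try nra; eexists; first [apply (Wd1 iota w HM); lra | apply (Wd2 iota w HM); lra].
  - change (t * / (2 * (1 + t))) with (gg t).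
    change (t / (2 * (1 + t))) with (gg t).
    change (Derive (fun x => w x)) with (Derive w).
    change (Derive (fun x => Derive w x)) with (Derive (Derive w)).
    set (a := Derive w (gg t)). set (b := w (gg t)). set (c := Derive (Derive w) (gg t)).
    unfold Rdiv. field. lra.
Qed.
End S3.


Lemma cont_lin (f g : R -> R) x a : continuous f x -> continuous g x ->
  continuous (fun y => a * f y + g y) x.
Proof.
  intros Hf Hg. apply (continuous_plus (fun y => a * f y) g); auto.
  apply (continuous_mult (fun _ => a) f); auto. apply continuous_const.
Qed.

Lemma gg_mono x y : 0 < x -> x <= y -> gg x <= gg y.
Proof.
  intros Hx Hxy. unfold gg. apply Rmult_le_reg_r with (2 * (1 + x) * (2 * (1 + y))); [nra|].
  unfold Rdiv. replace (x * / (2 * (1 + x)) * (2 * (1 + x) * (2 * (1 + y)))) with (x * (2 * (1 + y))) by (field; lra).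
  replace (y * / (2 * (1 + y)) * (2 * (1 + x) * (2 * (1 + y)))) with (y * (2 * (1 + x))) by (field; lra).
  nra.
Qed.

Section S4.
Context (iota : R) (w : R -> R) (HM : condM iota w) (I0 : R)
  (HI : is_RInt_gen (ff w) (at_right 0) (at_point 1) I0) (B : R) (HB : 0 <= B).

Let Z := zeta w I0 B.

Lemma Z0v : Z 0 = 0.
Proof. unfold Z, zeta, z2. destruct (Rlt_dec 0 0); [lra|]. rewrite Rplus_0_r, ln_1. ring. Qed.

Lemma Z_der t : 0 < t -> is_derive Z t (F1 w B t).
Proof. apply (zeta_der iota w HM I0 B). Qed.

Lemma Z_cont x : 0 <= x -> continuity_pt Z x.
Proof.
  intros Hx. apply continuity_pt_filterlim.
  destruct Hx as [Hx|<-].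
  - apply (@ex_derive_continuous R_AbsRing R_NormedModule). eexists. apply Z_der; auto.
  - apply (cont_lin (z2 w I0) (fun t => ln (1 + t))).
    + apply continuity_pt_filterlim. apply (z2_cont0 iota w HM I0 HI).
    + apply (@ex_derive_continuous R_AbsRing R_NormedModule). auto_derive. lra.
Qed.

Lemma F1_pos t : 0 < t -> 0 < F1 w B t.
Proof.
  intros Ht. unfold F1. destruct (gg_bounds t Ht) as [Hg _].
  pose proof (Wnn iota w HM (gg t) ltac:(lra)).
  assert (0 <= w (gg t) / t) by (apply Rdiv_le_0_compat; lra).
  assert (0 < / (1 + t)) by (apply Rinv_0_lt_compat; lra). nra.
Qed.

Lemma wg_dec x y : 0 < x -> x <= y -> w (gg y) / y <= w (gg x) / x.
Proof.
  intros Hx Hxy. destruct (gg_bounds x Hx) as [Hgx _]. destruct (gg_bounds y ltac:(lra)) as [Hgy _].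
  pose proof (gg_mono x y Hx Hxy) as Hgm.
  set (l := gg x / gg y).
  assert (Hl : 0 <= l <= 1).
  { unfold l. split. apply Rdiv_le_0_compat; lra.
    unfold Rdiv. apply Rmult_le_reg_r with (gg y); [lra|]. rewrite Rmult_assoc, Rinv_l by lra. lra. }
  pose proof (Wscale iota w HM l (gg y) Hl ltac:(lra)) as HW.
  replace (l * gg y) with (gg x) in HW by (unfold l; field; lra).
  assert (Hl2 : x / y <= l).
  { unfold l, gg. apply Rmult_le_reg_r with (y * (1 + x)); [nra|].
    replace (x / y * (y * (1 + x))) with (x * (1 + x)) by (field; lra).
    replace (x / (2 * (1 + x)) / (y / (2 * (1 + y))) * (y * (1 + x))) with (x * (1 + y)) by (field; lra).
    nra. }
  pose proof (Wnn iota w HM (gg y) ltac:(lra)).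
  assert (x / y * w (gg y) <= w (gg x)) by nra.
  apply Rmult_le_reg_r with x; [lra|].
  replace (w (gg x) / x * x) with (w (gg x)) by (field; lra).
  replace (w (gg y) / y * x) with (x / y * w (gg y)) by (field; lra). lra.
Qed.

Lemma F1_dec x y : 0 < x -> x < y -> F1 w B y < F1 w B x.
Proof.
  intros Hx Hxy. unfold F1. pose proof (wg_dec x y Hx ltac:(lra)).
  assert (/ (1 + y) < / (1 + x)) by (apply Rinv_lt_contravar; nra). nra.
Qed.

Lemma Z_strict x y l : 0 <= x -> x < y -> 0 < l < 1 ->
  l * Z x + (1 - l) * Z y < Z (l * x + (1 - l) * y).
Proof.
  apply (chord_strict Z (F1 w B)).
  - apply Z_der. - apply F1_dec. - apply Z_cont.
Qed.

Lemma Z_concave : concave_on_nonneg Z.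
Proof.
  intros x y l Hx Hy Hl.
  destruct (Req_dec l 0) as [->|Hl0].
  { replace (0 * x + (1 - 0) * y) with y by ring. lra. }
  destruct (Req_dec l 1) as [->|Hl1].
  { replace (1 * x + (1 - 1) * y) with x by ring. lra. }
  destruct (Rtotal_order x y) as [Hxy|[<-|Hxy]].
  - left. apply Z_strict; lra.
  - replace (l * x + (1 - l) * x) with x by ring. lra.
  - left. pose proof (Z_strict y x (1 - l) Hy Hxy ltac:(lra)) as H.
    replace ((1 - l) * y + (1 - (1 - l)) * x) with (l * x + (1 - l) * y) in H by ring. lra.
Qed.

Lemma Z_incr : incr_on_nonneg Z.
Proof.
  intros x y Hx Hxy. apply (incr_deriv Z (F1 w B) x y Hxy).
  - intros u Hu; apply Z_der; lra. - intros u Hu; apply F1_pos; lra.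
  - intros u Hu; apply Z_cont; lra.
Qed.

Lemma Z_pos t : 0 < t -> 0 < Z t.
Proof. intros. rewrite <- Z0v. apply Z_incr; lra. Qed.

Lemma DZ t : 0 < t -> Derive Z t = F1 w B t.
Proof. intros. apply is_derive_unique, Z_der; auto. Qed.

Lemma DN1 t : 0 < t -> Derive_n Z 1 t = F1 w B t.
Proof. intros. simpl. apply is_derive_unique. apply Z_der; auto. Qed.

Lemma DN2 t : 0 < t -> Derive_n Z 2 t = F2 w B t.
Proof.
  intros Ht. change (Derive (Derive_n Z 1) t = F2 w B t).
  rewrite (Derive_ext_loc _ (F1 w B)).
  - apply is_derive_unique. apply (F1_der iota w HM B); auto.
  - apply filter_imp with (P := fun y => 0 < y). intros; apply DN1; auto. apply loc_pos; auto.
Qed.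

Lemma DN3 t : 0 < t -> Derive_n Z 3 t = F3 w B t.
Proof.
  intros Ht. change (Derive (Derive_n Z 2) t = F3 w B t).
  rewrite (Derive_ext_loc _ (F2 w B)).
  - apply is_derive_unique. apply (F2_der iota w HM B); auto.
  - apply filter_imp with (P := fun y => 0 < y). intros; apply DN2; auto. apply loc_pos; auto.
Qed.

Lemma exDN t k : 0 < t -> (k <= 3)%nat -> ex_derive_n Z k t.
Proof.
  intros Ht Hk. destruct k as [|[|[|[|k]]]]; [exact I| | | |lia]; simpl.
  - eexists. apply Z_der; auto.
  - apply (ex_derive_ext_loc (F1 w B)).
    + apply filter_imp with (P := fun y => 0 < y). intros; symmetry; apply DN1; auto. apply loc_pos; auto.
    + eexists. apply (F1_der iota w HM B); auto.
  - apply (ex_derive_ext_loc (F2 w B)).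
    + apply filter_imp with (P := fun y => 0 < y). intros; symmetry; apply DN2; auto. apply loc_pos; auto.
    + eexists. apply (F2_der iota w HM B); auto.
Qed.

Lemma contDN2 t : 0 < t -> continuous (Derive_n Z 2) t.
Proof.
  intros Ht. apply (continuous_ext_loc _ (F2 w B)).
  - apply filter_imp with (P := fun y => 0 < y). intros; symmetry; apply DN2; auto. apply loc_pos; auto.
  - apply (@ex_derive_continuous R_AbsRing R_NormedModule). eexists. apply (F2_der iota w HM B); auto.
Qed.

Lemma contDN3 t : 0 < t -> continuous (Derive_n Z 3) t.
Proof.
  intros Ht. destruct (gg_bounds t Ht) as [Hg _].
  apply (continuous_ext_loc _ (F3 w B)).
  { apply filter_imp with (P := fun y => 0 < y). intros; symmetry; apply DN3; auto. apply loc_pos; auto. }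
  set (P := fun t => B * (/ (2 * (1 + t)^2))^2 / t).
  set (Q := fun t => B * (- Derive w (gg t) * / (1 + t)^3 / t
       - 2 * Derive w (gg t) * / (2 * (1 + t)^2) / t^2
       + 2 * w (gg t) / t^3) + 2 / (1 + t)^3).
  apply (continuous_ext (fun t => Derive (Derive w) (gg t) * P t + Q t)).
  { intros x. change (@eq R (Derive (Derive w) (gg x) * P x + Q x) (F3 w B x)). unfold F3, P, Q. unfold Rdiv. ring. }
  apply (continuous_plus (fun t => Derive (Derive w) (gg t) * P t) Q).
  - apply (continuous_mult (fun t => Derive (Derive w) (gg t)) P).
    + apply (continuous_comp gg (Derive (Derive w))).
      * apply (@ex_derive_continuous R_AbsRing R_NormedModule). eexists; apply der_gg; auto.
      * apply (Wc2 iota w HM); lra.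
    + apply (@ex_derive_continuous R_AbsRing R_NormedModule). unfold P. auto_derive. nra.
  - apply (@ex_derive_continuous R_AbsRing R_NormedModule). unfold Q, gg. auto_derive.
    change (t * / (2 * (1 + t))) with (gg t).
    repeat split; try (eexists; first [apply (Wd1 iota w HM); lra | apply (Wd2 iota w HM); lra]); try nra.
    assert (0 < t * (t * (t * 1))) by (apply Rmult_lt_0_compat; nra). lra.
Qed.

Lemma Z1ineq t0M : 0 < t0M ->
  (forall t, 0 < t < t0M -> t ^ 2 * Derive_n w 2 t >= - w t - 3 * t * Derive w t) ->
  forall t, 0 < t < Rmin (1/2) t0M -> t ^ 2 * Derive_n Z 3 t >= - 6 * Derive Z t.
Proof.
  intros Ht0 Hsec t Ht. pose proof (Rmin_l (1/2) t0M). pose proof (Rmin_r (1/2) t0M).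
  rewrite DN3, DZ by lra.
  destruct (gg_bounds t ltac:(lra)) as [Hg1 Hg2].
  set (y := gg t) in *.
  specialize (Hsec y ltac:(lra)). change (Derive_n w 2 y) with (Derive (Derive w) y) in Hsec.
  set (a := w y) in *. set (b := Derive w y) in *. set (c := Derive (Derive w) y) in *.
  assert (Ha : 0 <= a) by (apply (Wnn iota w HM); lra).
  assert (Hb : 0 <= b) by (apply (W1nn iota w HM); lra).
  assert (Hyb : y * b <= a) by (apply (W1c iota w HM); lra).
  set (p := 1 + t).
  assert (Hy : y = t / (2 * p)) by reflexivity.
  set (X := y ^ 2 * c). set (Y := y * b).
  assert (E : t ^ 2 * F3 w B t = B * (X / (p^2 * t) - 2 * Y / p^2 - 2 * Y / (t * p) + 2 * a / t) + 2 * t^2 / p^3).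
  { unfold F3, X, Y. fold y a b c. fold p. rewrite Hy. field. unfold p; lra. }
  assert (K : X - 2 * Y * t - 2 * Y * p + 2 * a * p^2 >= - 6 * a * p^2).
  { unfold X, Y. unfold p. nra. }
  assert (K2 : X / (p^2 * t) - 2 * Y / p^2 - 2 * Y / (t * p) + 2 * a / t >= - 6 * a / t).
  { assert (E2 : X / (p^2 * t) - 2 * Y / p^2 - 2 * Y / (t * p) + 2 * a / t + 6 * a / t
              = (X - 2 * Y * t - 2 * Y * p + 2 * a * p^2 + 6 * a * p^2) / (p^2 * t)).
    { field. unfold p; lra. }
    assert (0 <= (X - 2 * Y * t - 2 * Y * p + 2 * a * p^2 + 6 * a * p^2) / (p^2 * t)).
    { apply Rdiv_le_0_compat. lra. unfold p; nra. }
    lra. }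
  rewrite E. unfold F1. fold y a.
  assert (0 <= 2 * t^2 / p^3) by (apply Rdiv_le_0_compat; [nra| unfold p; nra]).
  assert (0 < / (1 + t)) by (apply Rinv_0_lt_compat; lra).
  assert (B * (X / (p^2 * t) - 2 * Y / p^2 - 2 * Y / (t * p) + 2 * a / t) >= B * (- 6 * a / t)) by nra.
  replace (B * (-6 * a / t)) with (-6 * (B * (a / t))) in * by (field; lra).
  lra.
Qed.

Lemma Z2 : condZ2 Z.
Proof.
  intros x y Hx Hxy. rewrite !DZ by lra.
  assert (E : forall u, 0 < u -> u * F1 w B u = B * w (gg u) + u / (1 + u)).
  { intros u Hu. unfold F1. field. lra. }
  rewrite !E by lra.
  destruct (gg_bounds x Hx) as [Hg _].
  pose proof (Wmono iota w HM (gg x) (gg y) ltac:(lra) (gg_mono x y Hx Hxy)).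
  assert (x / (1 + x) <= y / (1 + y)).
  { apply Rmult_le_reg_r with ((1 + x) * (1 + y)); [nra|].
    replace (x / (1 + x) * ((1 + x) * (1 + y))) with (x * (1 + y)) by (field; lra).
    replace (y / (1 + y) * ((1 + x) * (1 + y))) with (y * (1 + x)) by (field; lra). nra. }
  nra.
Qed.

Lemma Z3 : condZ3 Z.
Proof.
  exists 1, 1. split; [lra|split; [lra|]]. intros x y Hx Hxy Hy.
  rewrite !Rpower_1 by lra.
  pose proof (Z_strict 0 y (1 - x / y) (Rle_refl 0) ltac:(lra)) as H.
  assert (Hxy' : 0 < x / y < 1).
  { split. apply Rdiv_lt_0_compat; lra. apply Rmult_lt_reg_r with y; [lra|].
    replace (x / y * y) with x by (field; lra). lra. }
  specialize (H ltac:(lra)). rewrite Z0v in H.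
  replace ((1 - x / y) * 0 + (1 - (1 - x / y)) * y) with x in H by (field; lra).
  replace (1 - (1 - x / y)) with (x / y) in H by ring.
  apply Rmult_lt_reg_r with x; [lra|].
  replace (Z x / x * x) with (Z x) by (field; lra).
  replace (Z y / y * x) with (x / y * Z y) by (field; lra). lra.
Qed.

Lemma z2_cont x : 0 <= x -> continuity_pt (z2 w I0) x.
Proof.
  intros [Hx|<-]. apply continuity_pt_filterlim.
  apply (@ex_derive_continuous R_AbsRing R_NormedModule). eexists. apply (z2_der iota w HM I0); auto.
  apply (z2_cont0 iota w HM I0 HI).
Qed.

Lemma z2_bound t : 0 <= t -> z2 w I0 t <= z2 w I0 1 + w (1/2) * ln (1 + t).
Proof.
  intros Ht. pose proof (Wnn iota w HM (1/2) ltac:(lra)) as Hw.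
  assert (Hln : 0 <= ln (1 + t)).
  { rewrite <- ln_1. destruct (Req_dec t 0) as [->|]. rewrite Rplus_0_r; lra.
    left; apply ln_increasing; lra. }
  destruct (Rle_or_lt t 1) as [Ht1|Ht1].
  - assert (z2 w I0 t <= z2 w I0 1).
    { destruct (Req_dec t 1) as [->|Hne]; [lra|].
      pose proof (cmp_deriv (fun _ => 0) (z2 w I0) (fun _ => 0) (fun x => w (gg x) / x) t 1 ltac:(lra)) as H.
      assert (0 - 0 <= z2 w I0 1 - z2 w I0 t); [|lra]. apply H.
      - intros u _. auto_derive; auto.
      - intros x Hx. apply (z2_der iota w HM I0); lra.
      - intros x Hx. destruct (gg_bounds x ltac:(lra)). apply Rdiv_le_0_compat; [|lra].
        apply (Wnn iota w HM); lra.
      - intros; apply continuity_pt_const. intros a b; reflexivity.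
      - intros x Hx; apply z2_cont; lra. }
    nra.
  - pose proof (cmp_deriv (z2 w I0) (fun x => w (1/2) * ln x) (fun x => w (gg x) / x)
       (fun x => w (1/2) * / x) 1 t Ht1) as H.
    assert (z2 w I0 t - z2 w I0 1 <= w (1/2) * ln t - w (1/2) * ln 1).
    { apply H.
      - intros x Hx. apply (z2_der iota w HM I0); lra.
      - intros x Hx. auto_derive. lra. field. lra.
      - intros x Hx. destruct (gg_bounds x ltac:(lra)).
        apply Rmult_le_compat_r. left; apply Rinv_0_lt_compat; lra.
        apply (Wmono iota w HM); lra.
      - intros x Hx; apply z2_cont; lra.
      - intros x Hx. apply (proj2 (continuity_pt_filterlim (fun x => w (1/2) * ln x) x)).
        apply (@ex_derive_continuous R_AbsRing R_NormedModule (fun x => w (1/2) * ln x)). auto_derive. lra. }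
    rewrite ln_1 in H0. assert (ln t <= ln (1 + t)) by (left; apply ln_increasing; lra). nra.
Qed.

Lemma Z4 s : 0 < s -> condZ4 s Z.
Proof.
  intros Hs. pose proof (Wnn iota w HM (1/2) ltac:(lra)) as Hw.
  set (c2 := B * Rabs (z2 w I0 1) + (B * w (1/2) + 1) * (2 / s) + 1).
  assert (Hc2 : 0 < c2).
  { unfold c2. assert (0 <= B * Rabs (z2 w I0 1)) by (apply Rmult_le_pos; [lra|apply Rabs_pos]).
    assert (0 <= (B * w (1/2) + 1) * (2 / s)). { apply Rmult_le_pos. nra. apply Rdiv_le_0_compat; lra. }
    lra. }
  exists c2. split; auto. intros t Ht.
  set (L := ln (1 + t)). set (Rp := Rpower (1 + t) (s / 2)).
  assert (HL : 0 <= L).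
  { unfold L. rewrite <- ln_1. destruct (Req_dec t 0) as [->|]. rewrite Rplus_0_r; lra.
    left; apply ln_increasing; lra. }
  assert (HR1 : 1 + s / 2 * L <= Rp) by (unfold Rp, Rpower; fold L; apply exp_ineq1_le).
  assert (HLR : L <= 2 / s * Rp).
  { apply Rmult_le_reg_l with (s / 2). lra.
    replace (s / 2 * (2 / s * Rp)) with Rp by (field; lra). nra. }
  assert (HRp : 1 <= Rp) by nra.
  pose proof (z2_bound t Ht) as Hz.
  unfold Z, zeta. fold L.
  assert (B * z2 w I0 t <= B * Rabs (z2 w I0 1) + B * w (1/2) * L).
  { fold L in Hz. pose proof (Rle_abs (z2 w I0 1)).
    assert (B * z2 w I0 t <= B * (z2 w I0 1 + w (1/2) * L)) by (apply Rmult_le_compat_l; lra).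
    assert (B * z2 w I0 1 <= B * Rabs (z2 w I0 1)) by (apply Rmult_le_compat_l; lra). lra. }
  assert (B * Rabs (z2 w I0 1) <= B * Rabs (z2 w I0 1) * Rp).
  { assert (0 <= B * Rabs (z2 w I0 1)) by (apply Rmult_le_pos; [lra|apply Rabs_pos]). nra. }
  assert ((B * w (1/2) + 1) * L <= (B * w (1/2) + 1) * (2 / s * Rp)).
  { apply Rmult_le_compat_l. nra. auto. }
  unfold c2. nra.
Qed.

Lemma Zmain (s C m t1 : R) : 0 < C -> 0 < m -> 0 < t1 -> iota < s ->
  (forall t, 0 < t < t1 -> m * Rpower t iota < w t) ->
  B = 4 * C * (/ m + 1) ->
  forall t, 0 < t < Rmin t1 1 -> C * (Rpower t s + w t) <= t * Derive Z t.
Proof.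
  intros HC Hm Ht1 His Hbd HBdef t Ht. pose proof (Rmin_l t1 1). pose proof (Rmin_r t1 1).
  rewrite DZ by lra.
  replace (t * F1 w B t) with (B * w (gg t) + t / (1 + t)) by (unfold F1; field; lra).
  assert (Htt : 0 <= t / (1 + t)) by (apply Rdiv_le_0_compat; lra).
  set (l := / (2 * (1 + t))).
  assert (Hl : 1/4 <= l <= 1).
  { unfold l. split.
    - apply Rmult_le_reg_r with (2 * (1 + t)); [lra|]. rewrite Rinv_l by lra. lra.
    - apply Rmult_le_reg_r with (2 * (1 + t)); [lra|]. rewrite Rinv_l by lra. lra. }
  pose proof (Wscale iota w HM l t ltac:(lra) ltac:(lra)) as HW.
  replace (l * t) with (gg t) in HW by (unfold l, gg; field; lra).
  pose proof (Wnn iota w HM t ltac:(lra)) as Hwt.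
  assert (Hg : w t <= 4 * w (gg t)) by nra.
  assert (Hp : Rpower t s <= Rpower t iota).
  { unfold Rpower. left. apply exp_increasing.
    assert (ln t < 0) by (rewrite <- ln_1; apply ln_increasing; lra). nra. }
  specialize (Hbd t ltac:(lra)).
  assert (Hp2 : Rpower t s <= w t / m).
  { apply Rmult_le_reg_r with m; [lra|]. replace (w t / m * m) with (w t) by (field; lra). nra. }
  assert (C * (Rpower t s + w t) <= C * (w t / m + w t)) by (apply Rmult_le_compat_l; lra).
  assert (C * (w t / m + w t) = C * (/ m + 1) * w t) by (field; lra).
  assert (0 < C * (/ m + 1)) by (apply Rmult_lt_0_compat; [lra|]; pose proof (Rinv_0_lt_compat m Hm); lra).
  assert (C * (/ m + 1) * w t <= C * (/ m + 1) * (4 * w (gg t))) by (apply Rmult_le_compat_l; lra).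
  rewrite HBdef. lra.
Qed.
End S4.


Theorem lemma5p6 (s iota : R) (omega : R -> R) (C : R) :
  0 < s < 1 ->
  0 < iota -> iota < Rmin s (1 / 3) ->
  condM iota omega ->
  0 < C ->
  exists (t0 : R) (zeta : R -> R),
    0 < t0 /\
    (forall t, 0 <= t -> 0 <= zeta t) /\
    cont_on_nonneg zeta /\
    Cn_on 2 (fun t => 0 < t) zeta /\
    Cn_on 3 (fun t => 0 < t < 2) zeta /\
    condZ0 zeta /\ condZ1 zeta /\ condZ2 zeta /\ condZ3 zeta /\ condZ4 s zeta /\
    (forall t, 0 < t < t0 -> C * (Rpower t s + omega t) <= t * Derive zeta t).
Proof.
  intros Hs Hi Hi2 HM HC.
  pose proof HM as HM'. destruct HM' as (_&_&_&_&_&_&[I0 HI0]&t0M&Ht0M&Hdec&Hsec).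
  assert (HI : is_RInt_gen (ff omega) (at_right 0) (at_point 1) I0) by exact HI0.
  assert (His : iota < s) by (pose proof (Rmin_l s (1/3)); lra).
  set (t1 := t0M / 2).
  assert (Ht1 : 0 < t1) by (unfold t1; lra).
  assert (Hpw : forall x, 0 < Rpower x iota) by (intros; unfold Rpower; apply exp_pos).
  set (m := omega t1 / Rpower t1 iota).
  assert (Hm : 0 < m) by (unfold m; apply Rdiv_lt_0_compat; [apply (Wpos iota omega HM); lra | apply Hpw]).
  assert (Hbd : forall t, 0 < t < t1 -> m * Rpower t iota < omega t).
  { intros t Ht. specialize (Hdec t t1 ltac:(lra) ltac:(lra) ltac:(unfold t1; lra)).
    fold m in Hdec. pose proof (Hpw t).
    apply Rmult_lt_compat_r with (r := Rpower t iota) in Hdec; auto.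
    replace (omega t / Rpower t iota * Rpower t iota) with (omega t) in Hdec by (field; lra). lra. }
  set (B := 4 * C * (/ m + 1)).
  assert (HB : 0 <= B).
  { unfold B. pose proof (Rinv_0_lt_compat m Hm). apply Rmult_le_pos; lra. }
  exists (Rmin t1 1), (zeta omega I0 B).
  split; [apply Rmin_pos; lra|].
  split.
  { intros t [Ht|<-]. left; eapply Z_pos; eauto. rewrite Z0v; lra. }
  split.
  { intros x Hx. pose proof (proj1 (continuity_pt_filterlim _ _) (Z_cont iota omega HM I0 HI B x Hx)) as H.
    intros P HP. specialize (H P HP). change (locally x (fun y => 0 <= y -> P (zeta omega I0 B y))). eapply filter_imp; [|exact H]. simpl. auto. }
  split.
  { intros x Hx. split. intros k Hk. eapply exDN; eauto; lia. eapply contDN2; eauto. }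
  split.
  { intros x Hx. split. intros k Hk. eapply exDN; eauto; lra. eapply contDN3; eauto; lra. }
  split.
  { split; [|split; [|split]].
    - intros t Ht. eapply Z_pos; eauto.
    - eapply Z_incr; eauto.
    - eapply Z_concave; eauto.
    - apply Z0v. }
  split.
  { exists 6, (Rmin (1/2) t0M). split; [lra|]. split.
    { split. apply Rmin_pos; lra. pose proof (Rmin_l (1/2) t0M); lra. }
    intros t Ht. eapply Z1ineq with (t0M := t0M); eauto. }
  split. { eapply Z2; eauto. }
  split. { eapply Z3; eauto. }
  split. { eapply Z4; eauto; lra. }
  intros t Ht. eapply Zmain with (m := m) (t1 := t1); eauto; reflexivity.
Qed.
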